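(* Consider the central elements $m_\mu=m_\mu(L_1,\dots,L_4)\in\mathbb Z S_4$ for partitions $\mu$ with at most three parts and $|\mu|$ odd (the ''odd monomials''). Such an $m_\mu$ has at least one odd coefficient when expanded in the basis of class sums of $S_4$ if and only if it is one of: (1) $m_i$ for some odd $i\ge1$; (2) $m_{1,1,1}$ (among $\{m_{i,i,i}: i\text{ odd}\}$ only $m_{1,1,1}$ qualifies); (3) $m_{i,i,1}$ for some $i\ge2$ (among $\{m_{i,i,j}: j\text{ odd}, j\ne i\}$ exactly those with $j=1$ qualify); (4) $m_{i+j,i}$ for some $i\ge1$ and odd $j\ge1$. In particular no $m_{k+i+j,k+i,k}$ with $i,j,k\ge1$ and $j+k$ odd has an odd coefficient on any class sum.
   Context: $S_4$ is the symmetric group on $\{1,2,3,4\}$, $\mathbb Z S_4$ its integral group ring, whose centre has $\mathbb Z$-basis the five conjugacy class sums of $S_4$. The Jucys–Murphy elements are $L_1=0$ and $L_i=\sum_{k=1}^{i-1}(k\ i)$ for $i=2,3,4$; they pairwise commute. For a partition $\mu=(\mu_1,\dots,\mu_r)$, $m_\mu(x_1,\dots,x_4)$ is the monomial symmetric polynomial: the sum of all distinct monomials $x_1^{\alpha_1}\cdots x_4^{\alpha_4}$ with $(\alpha_1,\dots,\alpha_4)$ a rearrangement of $(\mu_1,\dots,\mu_r,0,\dots,0)$. A subscript list such as $m_{i,i,1}$ denotes $m_\mu(L_1,\dots,L_4)$ where $\mu$ is the partition whose parts are the listed entries sorted decreasingly. *)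

(* Defs.v *)
From HB Require Import structures.
From mathcomp Require Import all_boot all_order all_algebra all_fingroup.
Set Implicit Arguments. Unset Strict Implicit. Unset Printing Implicit Defensive.
Import GRing.Theory Num.Theory.
Local Open Scope ring_scope.

(* The integral group ring Z S_4, elements are finitely supported functions
   'S_4 -> int, i.e. a = \sum_g a(g) g. *)
Definition ZS4 := {ffun 'S_4 -> int}.

Definition gr_one : ZS4 := [ffun g => (g == 1%g)%:Z].

Definition gr_mul (a b : ZS4) : ZS4 :=
  [ffun g => \sum_(h : 'S_4) a h * b (h^-1 * g)%g].

Definition gr_exp (a : ZS4) (n : nat) : ZS4 := iter n (gr_mul a) gr_one.

(* Jucys--Murphy elements L_1..L_4, indexed by i : 'I_4 (i = 0 is L_1 = 0):
   L_i = \sum_{k < i} (k i). *)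
Definition JM (i : 'I_4) : ZS4 :=
  [ffun g => \sum_(k < 4 | (k < i)%N) (g == tperm k i)%:Z].

Definition JM_monomial (al : seq nat) : ZS4 :=
  foldr gr_mul gr_one
    [seq gr_exp (JM i) (nth 0%N al i) | i <- enum 'I_4].

(* m_mu(L_1,...,L_4) for mu with parts a >= b >= c (zeros allowed, at most
   three parts): sum over the distinct rearrangements of (a,b,c,0). *)
Definition m_JM (a b c : nat) : ZS4 :=
  \sum_(al <- undup (permutations [:: a; b; c; 0%N])) JM_monomial al.

(* Coefficient of a (central) element on the class sum of the conjugacy
   class C: the common value of a on C, read at a representative. *)
Definition class_coeff (x : ZS4) (C : {set 'S_4}) : int := x (repr C).

Definition has_odd_class_coeff (x : ZS4) : Prop :=
  exists2 C, C \in classes [set: 'S_4] & odd `|class_coeff x C|%N.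

(* Main.v *)
Require Import Defs.
From mathcomp Require Import all_boot all_order all_algebra all_fingroup.
From Stdlib Require Import Lia.


Definition Pl : seq (seq nat) := [:: [::0; 1; 2; 3]; [::0; 1; 3; 2]; [::0; 2; 1; 3]; [::0; 2; 3; 1]; [::0; 3; 1; 2]; [::0; 3; 2; 1]; [::1; 0; 2; 3]; [::1; 0; 3; 2]; [::1; 2; 0; 3]; [::1; 2; 3; 0]; [::1; 3; 0; 2]; [::1; 3; 2; 0]; [::2; 0; 1; 3]; [::2; 0; 3; 1]; [::2; 1; 0; 3]; [::2; 1; 3; 0]; [::2; 3; 0; 1]; [::2; 3; 1; 0]; [::3; 0; 1; 2]; [::3; 0; 2; 1]; [::3; 1; 0; 2]; [::3; 1; 2; 0]; [::3; 2; 0; 1]; [::3; 2; 1; 0]].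
Definition TmC : seq (seq nat) := [:: [::0; 1; 2; 4; 3; 5; 6; 7; 12; 18; 13; 19; 8; 10; 14; 20; 16; 22; 9; 11; 15; 21; 17; 23]; [::1; 0; 4; 2; 5; 3; 7; 6; 18; 12; 19; 13; 10; 8; 20; 14; 22; 16; 11; 9; 21; 15; 23; 17]; [::2; 3; 0; 5; 1; 4; 12; 13; 6; 19; 7; 18; 14; 16; 8; 22; 10; 20; 15; 17; 9; 23; 11; 21]; [::3; 2; 5; 0; 4; 1; 13; 12; 19; 6; 18; 7; 16; 14; 22; 8; 20; 10; 17; 15; 23; 9; 21; 11]; [::4; 5; 1; 3; 0; 2; 18; 19; 7; 13; 6; 12; 20; 22; 10; 16; 8; 14; 21; 23; 11; 17; 9; 15]; [::5; 4; 3; 1; 2; 0; 19; 18; 13; 7; 12; 6; 22; 20; 16; 10; 14; 8; 23; 21; 17; 11; 15; 9]; [::6; 7; 8; 10; 9; 11; 0; 1; 14; 20; 15; 21; 2; 4; 12; 18; 17; 23; 3; 5; 13; 19; 16; 22]; [::7; 6; 10; 8; 11; 9; 1; 0; 20; 14; 21; 15; 4; 2; 18; 12; 23; 17; 5; 3; 19; 13; 22; 16]; [::8; 9; 6; 11; 7; 10; 14; 15; 0; 21; 1; 20; 12; 17; 2; 23; 4; 18; 13; 16; 3; 22; 5; 19]; [::9; 8; 11; 6; 10; 7; 15; 14; 21; 0; 20; 1; 17; 12; 23; 2; 18; 4; 16; 13; 22; 3; 19; 5]; [::10; 11; 7; 9; 6; 8; 20; 21; 1; 15; 0; 14; 18;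 23; 4; 17; 2; 12; 19; 22; 5; 16; 3; 13]; [::11; 10; 9; 7; 8; 6; 21; 20; 15; 1; 14; 0; 23; 18; 17; 4; 12; 2; 22; 19; 16; 5; 13; 3]; [::12; 13; 14; 16; 15; 17; 2; 3; 8; 22; 9; 23; 0; 5; 6; 19; 11; 21; 1; 4; 7; 18; 10; 20]; [::13; 12; 16; 14; 17; 15; 3; 2; 22; 8; 23; 9; 5; 0; 19; 6; 21; 11; 4; 1; 18; 7; 20; 10]; [::14; 15; 12; 17; 13; 16; 8; 9; 2; 23; 3; 22; 6; 11; 0; 21; 5; 19; 7; 10; 1; 20; 4; 18]; [::15; 14; 17; 12; 16; 13; 9; 8; 23; 2; 22; 3; 11; 6; 21; 0; 19; 5; 10; 7; 20; 1; 18; 4]; [::16; 17; 13; 15; 12; 14; 22; 23; 3; 9; 2; 8; 19; 21; 5; 11; 0; 6; 18; 20; 4; 10; 1; 7]; [::17; 16; 15; 13; 14; 12; 23; 22; 9; 3; 8; 2; 21; 19; 11; 5; 6; 0; 20; 18; 10; 4; 7; 1]; [::18; 19; 20; 22; 21; 23; 4; 5; 10; 16; 11; 17; 1; 3; 7; 13; 9; 15; 0; 2; 6; 12; 8; 14]; [::19; 18; 22; 20; 23; 21; 5; 4; 16; 10; 17; 11; 3; 1; 13; 7; 15; 9; 2; 0; 12; 6; 14; 8]; [::20; 21; 18; 23; 19; 22; 10; 11; 4; 17; 5; 16; 7; 9; 1; 15; 3; 13; 6; 8; 0; 14; 2; 12]; [::21; 20; 23; 18; 22; 19; 11; 10; 17;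 4; 16; 5; 9; 7; 15; 1; 13; 3; 8; 6; 14; 0; 12; 2]; [::22; 23; 19; 21; 18; 20; 16; 17; 5; 11; 4; 10; 13; 15; 3; 9; 1; 7; 12; 14; 2; 8; 0; 6]; [::23; 22; 21; 19; 20; 18; 17; 16; 11; 5; 10; 4; 15; 13; 9; 3; 7; 1; 14; 12; 8; 2; 6; 0]].
Definition CjC : seq (seq nat) := [:: [::0; 0; 0; 0; 0; 0; 0; 0; 0; 0; 0; 0; 0; 0; 0; 0; 0; 0; 0; 0; 0; 0; 0; 0]; [::1; 1; 5; 5; 2; 2; 1; 1; 21; 21; 14; 14; 5; 5; 21; 21; 6; 6; 2; 2; 14; 14; 6; 6]; [::2; 5; 2; 1; 5; 1; 14; 21; 14; 1; 21; 1; 6; 21; 6; 5; 21; 5; 6; 14; 6; 2; 14; 2]; [::3; 4; 4; 3; 3; 4; 15; 20; 20; 15; 15; 20; 11; 19; 19; 11; 11; 19; 8; 12; 12; 8; 8; 12]; [::4; 3; 3; 4; 4; 3; 20; 15; 15; 20; 20; 15; 19; 11; 11; 19; 19; 11; 12; 8; 8; 12; 12; 8]; [::5; 2; 1; 2; 1; 5; 21; 14; 1; 14; 1; 21; 21; 6; 5; 6; 5; 21; 14; 6; 2; 6; 2; 14]; [::6; 6; 14; 14; 21; 21; 6; 6; 2; 2; 5; 5; 14; 14; 2; 2; 1; 1; 21; 21; 5; 5; 1; 1]; [::7; 7; 16; 16; 23; 23; 7; 7; 23; 23; 16; 16; 16; 16; 23; 23; 7; 7; 23; 23; 16; 16; 7;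 7]; [::8; 11; 12; 15; 19; 20; 12; 19; 8; 3; 11; 4; 8; 20; 12; 4; 15; 3; 11; 15; 19; 3; 20; 4]; [::9; 10; 17; 13; 22; 18; 13; 18; 22; 9; 17; 10; 10; 22; 18; 17; 9; 13; 9; 17; 13; 22; 10; 18]; [::10; 9; 13; 17; 18; 22; 18; 13; 9; 22; 10; 17; 22; 10; 17; 18; 13; 9; 17; 9; 22; 13; 18; 10]; [::11; 8; 15; 12; 20; 19; 19; 12; 3; 8; 4; 11; 20; 8; 4; 12; 3; 15; 15; 11; 3; 19; 4; 20]; [::12; 19; 8; 20; 11; 15; 8; 11; 12; 4; 19; 3; 12; 15; 8; 3; 20; 4; 19; 20; 11; 4; 15; 3]; [::13; 18; 10; 22; 9; 17; 9; 10; 18; 17; 13; 22; 17; 13; 22; 9; 10; 18; 22; 18; 17; 10; 9; 13]; [::14; 21; 6; 21; 6; 14; 2; 5; 6; 5; 6; 2; 2; 1; 14; 1; 14; 2; 5; 1; 21; 1; 21; 5]; [::15; 20; 11; 19; 8; 12; 3; 4; 19; 11; 12; 8; 4; 3; 20; 15; 8; 12; 3; 4; 15; 20; 11; 19]; [::16; 23; 7; 23; 7; 16; 23; 16; 7; 16; 7; 23; 23; 7; 16; 7; 16; 23; 16; 7; 23; 7; 23; 16]; [::17; 22; 9; 18; 10; 13; 22; 17; 13; 10; 18; 9; 18; 9; 10; 13; 22; 17; 13; 10; 9; 18; 17; 22]; [::18; 13; 22; 10; 17; 9; 10; 9; 17; 18; 22; 13; 13; 17; 9; 22; 18; 10; 18;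 22; 10; 17; 13; 9]; [::19; 12; 20; 8; 15; 11; 11; 8; 4; 12; 3; 19; 15; 12; 3; 8; 4; 20; 20; 19; 4; 11; 3; 15]; [::20; 15; 19; 11; 12; 8; 4; 3; 11; 19; 8; 12; 3; 4; 15; 20; 12; 8; 4; 3; 20; 15; 19; 11]; [::21; 14; 21; 6; 14; 6; 5; 2; 5; 6; 2; 6; 1; 2; 1; 14; 2; 14; 1; 5; 1; 21; 5; 21]; [::22; 17; 18; 9; 13; 10; 17; 22; 10; 13; 9; 18; 9; 18; 13; 10; 17; 22; 10; 13; 18; 9; 22; 17]; [::23; 16; 23; 7; 16; 7; 16; 23; 16; 7; 23; 7; 7; 23; 7; 16; 23; 16; 7; 16; 7; 23; 16; 23]].
Definition Pk (k : nat) : seq nat := nth [::] Pl k.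
Definition lcomp (p q : seq nat) : seq nat := [seq nth 0%N q x | x <- p].
Definition invl (p : seq nat) : seq nat := [seq index x p | x <- iota 0 4].
Definition tl (k i : nat) : seq nat :=
  [seq (if x == k then i else if x == i then k else x) | x <- iota 0 4].
Definition tm (j k : nat) : nat := nth 0%N (nth [::] TmC j) k.
Definition cj (i j : nat) : nat := nth 0%N (nth [::] CjC i) j.
Definition bone : seq bool := [seq j == 0%N | j <- iota 0 24].
Definition bmul (u v : seq bool) : seq bool :=
  [seq odd (count (fun k => nth false u k && nth false v (tm j k)) (iota 0 24)) | j <- iota 0 24].
Definition bexp (u : seq bool) (n : nat) : seq bool := iter n (bmul u) bone.
Definition Jv (i : nat) : seq bool :=
  [seq odd (count (fun k => (k < i) && (Pk j == tl k i)) (iota 0 4)) | j <- iota 0 24].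
Definition bmono (t : seq nat) : seq bool :=
  foldr bmul bone [seq bexp (Jv k) (nth 0%N t k) | k <- iota 0 4].
Definition pv (s : seq nat) : seq bool :=
  [seq odd (count (fun t => nth false (bmono t) j) (undup (permutations s))) | j <- iota 0 24].
Definition invb (u : seq bool) : bool :=
  all (fun i => all (fun j => nth false u (cj i j) == nth false u i) (iota 0 24)) (iota 0 24).
Definition rhsb (a b c : nat) : bool :=
  [|| (b == 0%N) && (c == 0%N), [&& a == 1%N, b == 1%N & c == 1%N],
      [&& a == b, 2 <= b & c == 1%N] | [&& c == 0%N, 1 <= b, b < a & odd (a - b)]].
Definition goodb (a b c : nat) : bool :=
  (c <= b <= a) ==> odd (a + b + c) ==>
  (invb (pv [:: a; b; c; 0%N]) && (has id (pv [:: a; b; c; 0%N]) == rhsb a b c)).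
Definition mkTbl : seq (seq (seq bool)) := [seq mkseq (bexp (Jv k)) 9 | k <- iota 0 4].
Definition bmonoT (tbl : seq (seq (seq bool))) (t : seq nat) : seq bool :=
  foldr bmul bone [seq nth [::] (nth [::] tbl k) (nth 0%N t k) | k <- iota 0 4].
Definition pvT tbl (s : seq nat) : seq bool :=
  let ms := [seq bmonoT tbl t | t <- undup (permutations s)] in
  [seq odd (count (fun m => nth false m j) ms) | j <- iota 0 24].
Definition goodbT tbl (a b c : nat) : bool :=
  (c <= b <= a) ==> odd (a + b + c) ==>
  (let v := pvT tbl [:: a; b; c; 0%N] in invb v && (has id v == rhsb a b c)).
Definition bigcheck : bool :=
  let tbl := mkTbl in
  all (fun a => all (fun b => all (fun c => goodbT tbl a b c) (iota 0 5)) (iota 0 7)) (iota 0 9).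

Lemma bexp_S u n : bexp u n.+1 = bmul u (bexp u n).
Proof. by []. Qed.

Definition validb (p : seq nat) : bool := (size p == 4%N) && uniq p && all (fun x => x < 4) p.
Lemma ok_sizeP : size Pl = 24%N. Proof. by vm_compute. Qed.
Lemma ok_uniqP : uniq Pl. Proof. by vm_compute. Qed.
Lemma ok_valid : all validb Pl. Proof. by vm_compute. Qed.
Lemma ok_id : all (fun j => (Pk j == iota 0 4) == (j == 0%N)) (iota 0 24). Proof. by vm_compute. Qed.
Lemma ok_inv : all (fun k => ((invl (Pk k)) \in Pl) && (lcomp (Pk k) (invl (Pk k)) == iota 0 4)) (iota 0 24).
Proof. by vm_compute. Qed.
Lemma ok_tm : all (fun j => all (fun k => (tm j k < 24) && (Pk (tm j k) == lcomp (invl (Pk k)) (Pk j))) (iota 0 24)) (iota 0 24).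
Proof. by vm_compute. Qed.
Lemma ok_cj : all (fun i => all (fun j => [&& cj i j < 24, lcomp (Pk i) (Pk j) \in Pl &
             Pk (cj i j) == lcomp (invl (Pk j)) (lcomp (Pk i) (Pk j))]) (iota 0 24)) (iota 0 24).
Proof. by vm_compute. Qed.
Lemma ok_tl : all (fun k => all (fun i => tl k i \in Pl) (iota 0 4)) (iota 0 4).
Proof. by vm_compute. Qed.
Lemma ok_per : all (fun k => bexp (Jv k) 5 == bexp (Jv k) 3) (iota 0 4).
Proof. by vm_compute. Qed.


Lemma bexp_shift k m : k < 4 -> 3 <= m -> bexp (Jv k) (m + 2) = bexp (Jv k) m.
Proof.
move=> Hk; elim: m => [//|m IH] Hm.
have := allP ok_per k; rewrite mem_iota add0n => /(_ Hk) /eqP Hb.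
case: (leqP 3 m) => [m3|m2]; first by rewrite addSn bexp_S IH // bexp_S.
have -> : m = 2 by apply/eqP; rewrite eqn_leq -ltnS m2; exact: Hm.
exact: Hb.
Qed.

Lemma bigcheckT : bigcheck.
Proof. by vm_compute. Qed.

Lemma pv_map s f g : size s = 4%N -> {in s, forall x, g (f x) = x} ->
  {in s, forall x k, k < 4 -> bexp (Jv k) (f x) = bexp (Jv k) x} ->
  pv (map f s) = pv s.
Proof.
move=> Hs Hgf Hb.
have Hp : perm_eq (map (map f) (permutations s)) (permutations (map f s)).
  apply: uniq_perm; last first.
  - move=> t; rewrite mem_permutations; apply/mapP/idP => [[u Hu ->]|Ht].
      by apply: perm_map; rewrite -mem_permutations.
    exists (map g t).
      rewrite mem_permutations.
      have -> : s = map g (map f s).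
        by rewrite -map_comp map_id_in // => x Hx /=; rewrite Hgf.
      by rewrite perm_map.
    rewrite -map_comp map_id_in // => y Hy /=.
    have : y \in map f s by rewrite -(perm_mem Ht).
    by case/mapP => x Hx ->; rewrite Hgf.
  - exact: permutations_uniq.
  - rewrite map_inj_in_uniq ?permutations_uniq // => t1 t2 H1 H2 E.
    have K : forall t, t \in permutations s -> map g (map f t) = t.
      move=> t; rewrite mem_permutations => Ht; rewrite -map_comp map_id_in // => x Hx /=.
      by rewrite Hgf // -(perm_mem Ht).
    by rewrite -(K _ H1) E K.
rewrite /pv !undup_id ?permutations_uniq //; apply: eq_map => j.
move/seq.permP: Hp => Hp; rewrite -Hp count_map; congr odd; apply: eq_in_count => t Ht /=.
congr (nth false _ j); rewrite /bmono; congr foldr; apply/eq_in_map => k.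
rewrite mem_iota add0n => Hk.
move: Ht; rewrite mem_permutations => Ht.
have Hst : size t = 4%N by rewrite (perm_size Ht).
rewrite (nth_map 0%N) ?Hst //; apply: Hb => //.
by rewrite -(perm_mem Ht) mem_nth ?Hst.
Qed.

Definition shift (t x : nat) : nat := if t <= x then x - 2 else x.

Lemma pv_shift s t : size s = 4%N -> 5 <= t -> {in s, forall x, (x + 2 < t) || (t <= x)} ->
  pv (map (shift t) s) = pv s.
Proof.
move=> Hs Ht Hx.
apply: (@pv_map s (shift t) (fun y => if t - 2 <= y then y + 2 else y)) => //.
  move=> x /Hx; rewrite /shift; case/orP => H.
    have xt : x < t by apply: leq_ltn_trans (leq_addr 2 x) H.
    have xt2 : x < t - 2 by rewrite ltn_subRL addnC.
    by rewrite (leqNgt t x) xt /= leqNgt xt2.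
  have H2 : 2 <= x by apply: leq_trans H; apply: leq_trans Ht.
  by rewrite H (leq_sub2r 2 H) subnK.
move=> x _ k Hk; rewrite /shift; case: ifP => // H.
have H2 : 2 <= x by apply: leq_trans H; apply: leq_trans Ht.
rewrite -{2}(subnK H2) bexp_shift //.
by rewrite -(leq_add2r 2) subnK // (leq_trans Ht H).
Qed.

Lemma pvT_ok s : all (fun x => x <= 8) s -> pvT mkTbl s = pv s.
Proof.
move=> Hs; rewrite /pvT /pv; apply: eq_map => j; congr odd.
rewrite count_map; apply: eq_in_count => t Ht /=; congr (nth false _ j).
rewrite /bmonoT /bmono; congr foldr; apply/eq_in_map => k.
rewrite mem_iota add0n => Hk.
rewrite /mkTbl (nth_map 0%N) ?size_iota // nth_iota // add0n nth_mkseq //.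
move: Ht; rewrite mem_undup mem_permutations => Ht.
case: (ltnP k (size t)) => Hkt; last by rewrite nth_default.
have : nth 0%N t k \in s by rewrite -(perm_mem Ht) mem_nth.
by move/(allP Hs).
Qed.

Ltac nlia := unfold addn, subn, muln in *; lia.

Lemma bigcheck_all a b c : a <= 8 -> b <= 6 -> c <= 4 -> goodbT mkTbl a b c.
Proof.
move=> Ha Hb Hc; have := bigcheckT.
rewrite /bigcheck.
move/allP/(_ a).
rewrite mem_iota add0n ltnS => /(_ Ha).
move/allP/(_ b); rewrite mem_iota add0n ltnS => /(_ Hb).
move/allP/(_ c); rewrite mem_iota add0n ltnS => /(_ Hc).
done.
Qed.

Lemma small_good a b c : a <= 8 -> b <= 6 -> c <= 4 -> goodb a b c.
Proof.
move=> Ha Hb Hc; have := @bigcheck_all a b c Ha Hb Hc.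
have Hs : all (fun x => x <= 8) [:: a; b; c; 0%N].
  apply/allP => x; rewrite !inE => /or4P [] /eqP -> //.
    by apply: leq_trans Hb _.
  by apply: leq_trans Hc _.
rewrite /goodbT /goodb.
rewrite pvT_ok; [by move=> H; exact H | exact Hs].
Qed.
Lemma good_transfer a b c a' b' c' : pv [:: a; b; c; 0%N] = pv [:: a'; b'; c'; 0%N] ->
  rhsb a b c = rhsb a' b' c' -> (c <= b <= a -> c' <= b' <= a') ->
  odd (a + b + c) = odd (a' + b' + c') -> goodb a' b' c' -> goodb a b c.
Proof.
move=> Hp Hr Hs Ho; rewrite /goodb Hp Hr Ho => G; apply/implyP => H.
exact: (implyP G (Hs H)).
Qed.

Lemma rhsb_c a b c : 2 <= c -> rhsb a b c = false.
Proof. by case: c => [|[|c]] // _; rewrite /rhsb /= !andbF. Qed.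

Lemma rhsb_b a1 b1 c : b1 <= a1 -> rhsb a1.+2.+3 b1.+2.+3 c = rhsb a1.+3 b1.+3 c.
Proof. by move=> _; rewrite /rhsb /= !eqSS !ltnS !subSS. Qed.

Lemma rhsb_a b d c : rhsb (b + d.+3) b c = rhsb (b + d.+1) b c.
Proof.
have h1 : b < b + d.+1 by rewrite -addSnnS leq_addr.
have h3 : b < b + d.+3 by rewrite -addSnnS leq_addr.
rewrite /rhsb (gtn_eqF h1) (gtn_eqF h3) h1 h3 !addKn /= negbK.
case: b {h1 h3} => [|b]; rewrite ?add0n ?addSn //=.
  by rewrite !andbF !orbF.
by rewrite !eqSS !addn_eq0 /= !andbF.
Qed.

Lemma rhsb_shift2 a b c : 5 <= b -> b <= a -> rhsb a b c = rhsb (a - 2) (b - 2) c.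
Proof.
case: b => [|[|[|[|[|b1]]]]] //; case: a => [|[|[|[|[|a1]]]]] // _ H.
all: try by rewrite !subSS !subn0 rhsb_b.
Qed.

Lemma rhsb_shift1 a b c : b + 3 <= a -> rhsb a b c = rhsb (a - 2) b c.
Proof.
move=> H.
have [d ->] : exists d, a = b + d.+3 by exists (a - b - 3); move/leP: H => H; nlia.
rewrite rhsb_a; congr rhsb; nlia.
Qed.

Lemma oddS2 n : odd n.+2 = odd n.
Proof. by rewrite /= negbK. Qed.

Lemma goodb_all a b c : goodb a b c.
Proof.
suff H : forall n a b c, a + b + c <= n -> goodb a b c by exact: (H _ a b c (leqnn _)).
elim=> [|n IH] {}a {}b {}c Hn.
  by move/leP: Hn => Hn; apply: small_good; apply/leP; nlia.
case: (boolP ((c <= b) && (b <= a))) => Hsort; last first.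
  by rewrite /goodb (negbTE Hsort).
case/andP: Hsort => Hcb Hba.
case: (leqP 5 c) => Hc.
  have Hs := @pv_shift [:: a; b; c; 0%N] c erefl Hc.
  have Hb5 : 5 <= b by apply: leq_trans Hcb.
  have Ha5 : 5 <= a by apply: leq_trans Hba.
  rewrite /= /shift (leq_trans Hcb Hba) Hcb leqnn leqNgt (leq_trans _ Hc) //= in Hs.
  apply: (@good_transfer a b c (a - 2) (b - 2) (c - 2)).
  - symmetry; apply: Hs => x; rewrite !inE => /or4P [] /eqP -> ; apply/orP.
    + by right; apply: leq_trans Hcb Hba.
    + by right.
    + by right.
    + by left; apply: leq_trans Hc.
  - rewrite !rhsb_c //; apply/leP; move/leP: Hc; nlia.
  - move=> _; apply/andP; split; apply/leP; move/leP: Hcb; move/leP: Hba; nlia.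
  - have E : a + b + c = (a - 2 + (b - 2) + (c - 2)) + 6.
      by move/leP: Hc; move/leP: Hcb; move/leP: Hba => *; nlia.
    by rewrite E oddD /= addbF.
  - apply: IH; move/leP: Hn; move/leP: Hc; move/leP: Hcb => *; apply/leP; nlia.
case: (leqP 5 b) => Hb.
case: (leqP (c + 3) b) => Hcb3.
  have Hs := @pv_shift [:: a; b; c; 0%N] b erefl Hb.
  have Ha5 : 5 <= a by apply: leq_trans Hba.
  have Hcb' : (b <= c) = false by apply/negbTE; rewrite -ltnNge; apply/leP; move/leP: Hcb3; nlia.
  rewrite /= /shift Hba leqnn Hcb' leqNgt (leq_trans _ Hb) //= in Hs.
  apply: (@good_transfer a b c (a - 2) (b - 2) c).
  - symmetry; apply: Hs => x; rewrite !inE => /or4P [] /eqP -> ; apply/orP.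
    + by right.
    + by right.
    + by left; apply/leP; move/leP: Hcb3; nlia.
    + by left; apply: leq_trans Hb.
  - exact: rhsb_shift2.
  - move=> _; apply/andP; split; apply/leP; move/leP: Hcb3; move/leP: Hba; nlia.
  - have E : a + b + c = (a - 2 + (b - 2) + c) + 4.
      by move/leP: Hb; move/leP: Hba => *; nlia.
    by rewrite E oddD /= addbF.
  - apply: IH; move/leP: Hn; move/leP: Hb; move/leP: Hba => *; apply/leP; nlia.
all: have Hb6 : b <= 6 by apply/leP; repeat match goal with H : is_true (_ <= _) |- _ => move/leP: H => H end; nlia.
all: case: (leqP a 8) => Ha; first by apply: small_good.
all: have Ha5 : 5 <= a by apply: leq_trans Ha.
all: have Hs := @pv_shift [:: a; b; c; 0%N] a erefl Ha5.
all: have Hab : (a <= b) = false by apply/negbTE; rewrite -ltnNge; apply/leP; move/leP: Hb6; move/leP: Ha; nlia.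
all: have Hac : (a <= c) = false by apply/negbTE; rewrite -ltnNge; apply/leP; move/leP: Hb6; move/leP: Hcb; move/leP: Ha; nlia.
all: rewrite /= /shift leqnn Hab Hac leqNgt (leq_trans _ Ha5) //= in Hs.
all: apply: (@good_transfer a b c (a - 2) b c).
all: try (symmetry; apply: Hs => x; rewrite !inE => /or4P [] /eqP -> ; apply/orP;
  [ by right | by left; apply/leP; move/leP: Hb6; move/leP: Ha; nlia
  | by left; apply/leP; move/leP: Hb6; move/leP: Hcb; move/leP: Ha; nlia
  | by left; apply/leP; move/leP: Ha; nlia ]).
all: try (apply: rhsb_shift1; apply/leP; move/leP: Hb6; move/leP: Ha; nlia).
all: try (move=> _; apply/andP; split => //; apply/leP; move/leP: Hb6; move/leP: Ha; nlia).
all: try (have E : a + b + c = (a - 2 + b + c) + 2 by move/leP: Ha5 => *; nlia);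
  try (by rewrite E oddD /= addbF).
all: apply: IH; apply/leP; move/leP: Hn; move/leP: Ha5 => *; nlia.
Qed.

Import GRing.Theory.
Local Open Scope ring_scope.

Lemma int_split (x : int) : exists a b : nat, x = a%:Z - b%:Z.
Proof.
case: x => n; first by exists n, 0%N; rewrite subr0.
by exists 0%N, n.+1; rewrite NegzE sub0r.
Qed.

Lemma odd_dist (a b : nat) : odd `|a%:Z - b%:Z|%N = odd a (+) odd b.
Proof.
case: (leqP b a) => H.
  by rewrite (distnEl H) (oddB H).
have H' := ltnW H.
by rewrite (distnEr H') (oddB H') addbC.
Qed.

Lemma odd_abszD (x y : int) : odd (absz (x + y)) = odd (absz x) (+) odd (absz y).
Proof.
have [a [b ->]] := int_split x; have [c [d ->]] := int_split y.
have -> : a%:Z - b%:Z + (c%:Z - d%:Z) = (a + c)%N%:Z - (b + d)%N%:Z.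
  by rewrite !PoszD opprD addrACA.
rewrite !odd_dist !oddD.
by case: (odd a); case: (odd b); case: (odd c); case: (odd d).
Qed.

Lemma odd_abszM (x y : int) : odd (absz (x * y)) = odd (absz x) && odd (absz y).
Proof. by rewrite abszM oddM. Qed.

Lemma odd_sum (I : Type) (r : seq I) (P : pred I) (F : I -> int) :
  odd (absz (\sum_(i <- r | P i) F i)) = odd (count (fun i => P i && odd (absz (F i))) r).
Proof.
elim: r => [|i r IH]; first by rewrite big_nil.
rewrite big_cons /=; case: (P i) => /=; first by rewrite odd_abszD IH oddD oddb.
by rewrite IH.
Qed.
Local Close Scope ring_scope.

Set Implicit Arguments. Unset Strict Implicit.

Definition phif (p : seq nat) : {ffun 'I_4 -> 'I_4} := [ffun i : 'I_4 => (inord (nth 0%N p i) : 'I_4)].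
Lemma phifE p i : phif p i = inord (nth 0%N p i).
Proof. by rewrite ffunE. Qed.
Definition phi (p : seq nat) : 'S_4 := insubd (1%g : 'S_4) (phif p).

Lemma phi_inj_fun p : validb p -> injectiveb (phif p).
Proof.
case/andP => /andP [/eqP Hs Hu] /allP Ha.
have Hlt : forall i : 'I_4, (nth 0%N p i < 4)%N.
  by move=> i; apply: Ha; apply: mem_nth; rewrite Hs ltn_ord.
apply/injectiveP => i j; rewrite !phifE => /(congr1 (@nat_of_ord 4)).
rewrite !inordK ?Hlt // => /eqP; rewrite nth_uniq ?Hs ?ltn_ord // => /eqP.
exact: val_inj.
Qed.

Lemma phiE p (Hp : validb p) (i : 'I_4) : (phi p i : nat) = nth 0%N p i.
Proof.
rewrite -pvalE /phi insubdK; last exact: phi_inj_fun.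
transitivity (nat_of_ord (inord (nth 0%N p i) : 'I_4)); first by congr nat_of_ord; exact: phifE.
rewrite inordK //.
by case/andP: Hp => /andP [/eqP Hs _] /allP Ha; apply: Ha; apply: mem_nth; rewrite Hs ltn_ord.
Qed.

Lemma phi_eq p q : validb p -> validb q -> (phi p == phi q) = (p == q).
Proof.
move=> Hp Hq; apply/eqP/eqP => [E|->//].
have Hsp : size p = 4%N by case/andP: Hp => /andP [/eqP ? _].
have Hsq : size q = 4%N by case/andP: Hq => /andP [/eqP ? _].
apply: (@eq_from_nth _ 0%N); first by rewrite Hsp Hsq.
move=> i; rewrite Hsp => Hi.
have := congr1 (fun s : 'S_4 => val (s (Ordinal Hi))) E.
by rewrite /= !phiE.
Qed.

Lemma phi_comp p q : validb p -> validb q -> validb (lcomp p q) ->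
  phi (lcomp p q) = (phi p * phi q)%g.
Proof.
move=> Hp Hq Hpq; apply/permP => i; rewrite permM; apply: ord_inj.
rewrite (phiE Hpq) (phiE Hq) (phiE Hp) /lcomp (nth_map 0%N) //.
by case/andP: Hp => /andP [/eqP -> _] _.
Qed.

Lemma phi_id : phi (iota 0 4) = 1%g.
Proof.
apply/permP => i; rewrite perm1; apply: ord_inj.
by rewrite (phiE (p := iota 0 4) erefl) nth_iota.
Qed.

Lemma mem_valid p : p \in Pl -> validb p.
Proof. exact: (allP ok_valid). Qed.

Lemma Pk_in k : k < 24 -> Pk k \in Pl.
Proof. by move=> Hk; apply: mem_nth; rewrite ok_sizeP. Qed.

Lemma Pk_valid k : k < 24 -> validb (Pk k).
Proof. by move=> Hk; apply: mem_valid; apply: Pk_in. Qed.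

Lemma phi_invl k : k < 24 -> phi (invl (Pk k)) = ((phi (Pk k))^-1)%g.
Proof.
move=> Hk; have := allP ok_inv k; rewrite mem_iota add0n => /(_ Hk) /andP [Hin /eqP E].
apply/esym/eqP; rewrite eq_invg_mul -phi_comp ?Pk_valid ?mem_valid // ?E ?phi_id //.
Qed.

Lemma phi_tm j k : j < 24 -> k < 24 -> ((phi (Pk k))^-1 * phi (Pk j))%g = phi (Pk (tm j k)).
Proof.
move=> Hj Hk; have := allP ok_tm j; rewrite mem_iota add0n => /(_ Hj) /allP /(_ k).
rewrite mem_iota add0n => /(_ Hk) /andP [Ht /eqP E].
have := allP ok_inv k; rewrite mem_iota add0n => /(_ Hk) /andP [Hin _].
by rewrite E -phi_invl // -phi_comp ?Pk_valid ?mem_valid // -E Pk_in.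
Qed.

Lemma tm_lt j k : j < 24 -> k < 24 -> tm j k < 24.
Proof.
move=> Hj Hk; have := allP ok_tm j; rewrite mem_iota add0n => /(_ Hj) /allP /(_ k).
by rewrite mem_iota add0n => /(_ Hk) /andP [].
Qed.

Lemma phi_cj i j : i < 24 -> j < 24 -> ((phi (Pk i)) ^ (phi (Pk j)))%g = phi (Pk (cj i j)) /\ cj i j < 24.
Proof.
move=> Hi Hj; have := allP ok_cj i; rewrite mem_iota add0n => /(_ Hi) /allP /(_ j).
rewrite mem_iota add0n => /(_ Hj) /and3P [Hc Hin /eqP E].
have := allP ok_inv j; rewrite mem_iota add0n => /(_ Hj) /andP [Hin2 _].
split => //; rewrite E conjgE -phi_invl // -phi_comp ?Pk_valid ?mem_valid //.
by rewrite -phi_comp ?Pk_valid ?mem_valid // -E Pk_in.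
Qed.

Lemma tperm_phi (k : nat) (i : 'I_4) : k < 4 -> tperm (inord k) i = phi (tl k i).
Proof.
move=> Hk.
have Hv : validb (tl k i).
  apply: mem_valid; have := allP ok_tl k; rewrite mem_iota add0n => /(_ Hk) /allP /(_ i).
  by rewrite mem_iota add0n ltn_ord => /(_ isT).
apply/permP => x; apply: ord_inj; rewrite (phiE Hv) /tl (nth_map 0%N) ?size_iota ?ltn_ord //.
rewrite nth_iota ?ltn_ord // add0n.
case: tpermP => [->|->|H1 H2].
- by rewrite inordK // eqxx.
- rewrite inordK //; case: eqP => [->//|_]; by rewrite eqxx.
- have -> : (nat_of_ord x == k) = false.
    by apply/negbTE/eqP => E; apply: H1; apply: ord_inj; rewrite inordK.
  have -> : (nat_of_ord x == nat_of_ord i) = false.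
    by apply/negbTE/eqP => E; apply: H2; apply: ord_inj.
  by [].
Qed.

Definition Sl : seq 'S_4 := [seq phi (Pk k) | k <- iota 0 24].

Lemma Sl_uniq : uniq Sl.
Proof.
rewrite map_inj_in_uniq ?iota_uniq // => k l; rewrite !mem_iota !add0n => Hk Hl /eqP.
rewrite phi_eq ?Pk_valid // => /eqP E.
apply/eqP; rewrite -(nth_uniq [::] _ _ ok_uniqP) ?ok_sizeP //.
by rewrite /Pk in E; rewrite E.
Qed.

Lemma Sl_all (h : 'S_4) : h \in Sl.
Proof.
have Hc : #|Sl| = #|'S_4|.
  by rewrite (card_uniqP Sl_uniq) card_Sn size_map size_iota.
have := subset_cardP Hc (subset_predT _).
by move/(_ h); rewrite inE => ->.
Qed.

Lemma S4_cover (h : 'S_4) : exists2 k, k < 24 & h = phi (Pk k).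
Proof.
by have /mapP [k Hk ->] := Sl_all h; exists k => //; move: Hk; rewrite mem_iota add0n.
Qed.

Local Open Scope ring_scope.

Lemma sumS4 (F : 'S_4 -> int) : \sum_(h : 'S_4) F h = \sum_(k <- iota 0 24) F (phi (Pk k)).
Proof.
rewrite -(big_map (fun k => phi (Pk k)) xpredT F) -/Sl [in RHS]big_uniq ?Sl_uniq //.
by apply: eq_bigl => h; rewrite Sl_all.
Qed.

Local Close Scope ring_scope.

Definition par (x : ZS4) : seq bool := [seq odd (absz (x (phi (Pk j)))) | j <- iota 0 24].

Lemma size_par x : size (par x) = 24%N.
Proof. by rewrite size_map size_iota. Qed.

Lemma nth_par x j : j < 24 -> nth false (par x) j = odd (absz (x (phi (Pk j)))).
Proof. by move=> Hj; rewrite (nth_map 0%N) ?size_iota // nth_iota. Qed.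

Lemma nth_iota24 (F : nat -> bool) j : j < 24 -> nth false [seq F j | j <- iota 0 24] j = F j.
Proof. by move=> Hj; rewrite (nth_map 0%N) ?size_iota // nth_iota. Qed.

Lemma par_mul x y : par (gr_mul x y) = bmul (par x) (par y).
Proof.
apply: (@eq_from_nth _ false); first by rewrite /bmul size_par size_map size_iota.
move=> j; rewrite size_par => Hj.
rewrite nth_par // /bmul nth_iota24 // /gr_mul ffunE sumS4 odd_sum.
congr odd; apply: eq_in_count => k; rewrite mem_iota add0n => Hk /=.
by rewrite phi_tm // odd_abszM !nth_par // tm_lt.
Qed.

Lemma par_one : par gr_one = bone.
Proof.
apply: (@eq_from_nth _ false); first by rewrite /bone size_par size_map size_iota.
move=> j; rewrite size_par => Hj.
rewrite nth_par // /bone nth_iota24 // /gr_one ffunE /= oddb.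
rewrite -phi_id phi_eq ?Pk_valid //.
by have := allP ok_id j; rewrite mem_iota add0n => /(_ Hj) /eqP.
Qed.

Lemma par_exp x n : par (gr_exp x n) = bexp (par x) n.
Proof.
elim: n => [|n IH]; first exact: par_one.
by rewrite bexp_S -IH -par_mul.
Qed.

Lemma par_JM (i : 'I_4) : par (JM i) = Jv i.
Proof.
apply: (@eq_from_nth _ false); first by rewrite /Jv size_par size_map size_iota.
move=> j; rewrite size_par => Hj.
rewrite nth_par // /Jv nth_iota24 // /JM ffunE odd_sum.
rewrite [index_enum _]unlock -enumT.
have -> : count (fun k : 'I_4 => (k < i) && odd (absz ((phi (Pk j) == tperm k i) : int)))
      (enum 'I_4) =
    count (fun k => (k < i) && (Pk j == tl k i)) (map (@nat_of_ord 4) (enum 'I_4)).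
  rewrite count_map; apply: eq_count => k /=; congr andb.
  by rewrite oddb -(inord_val k) tperm_phi ?ltn_ord // inord_val phi_eq ?Pk_valid //
    (mem_valid (allP (allP ok_tl k _) i _)) ?mem_iota ?add0n ?ltn_ord.
by rewrite val_enum_ord.
Qed.

Lemma par_foldr (l : seq ZS4) : par (foldr gr_mul gr_one l) = foldr bmul bone (map par l).
Proof. by elim: l => [|x l IH] /=; [exact: par_one | rewrite par_mul IH]. Qed.

Lemma par_mono al : par (JM_monomial al) = bmono al.
Proof.
rewrite /JM_monomial par_foldr /bmono -map_comp; congr foldr.
rewrite -val_enum_ord -map_comp; apply: eq_map => i /=.
by rewrite par_exp par_JM.
Qed.

Lemma par_mJM a b c : par (m_JM a b c) = pv [:: a; b; c; 0%N].
Proof.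
apply: (@eq_from_nth _ false); first by rewrite /pv size_par size_map size_iota.
move=> j; rewrite size_par => Hj.
rewrite nth_par // /pv nth_iota24 // /m_JM sum_ffunE odd_sum.
congr odd; apply: eq_count => al /=.
by rewrite -par_mono nth_par.
Qed.

Lemma has_odd_iff (x : ZS4) : invb (par x) -> (has_odd_class_coeff x <-> has id (par x)).
Proof.
move=> Hinv; split.
  case=> C _; rewrite /class_coeff => Ho.
  have [k Hk E] := S4_cover (repr C).
  apply/(has_nthP false); exists k; first by rewrite size_par.
  by rewrite /= nth_par // -E.
case/(has_nthP false) => j; rewrite size_par => Hj /=; rewrite nth_par // => Ho.
exists ((phi (Pk j)) ^: [set: 'S_4])%g; first by apply: mem_classes; rewrite in_setT.
rewrite /class_coeff.
have : repr ((phi (Pk j)) ^: [set: 'S_4])%g \in ((phi (Pk j)) ^: [set: 'S_4])%g.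
  by apply: mem_repr; apply: class_refl.
case/imsetP => h _ ->.
have [l Hl ->] := S4_cover h.
have [-> Hc] := phi_cj Hj Hl.
rewrite -nth_par //.
have := allP Hinv j; rewrite mem_iota add0n => /(_ Hj) /allP /(_ l).
by rewrite mem_iota add0n => /(_ Hl) /eqP ->; rewrite nth_par.
Qed.

Lemma rhsbP a b c : c <= b <= a ->
  reflect [\/ b = 0%N /\ c = 0%N,
           a = 1%N /\ b = 1%N /\ c = 1%N,
           exists2 i, (2 <= i)%N & (a = i /\ b = i /\ c = 1%N)
         | exists i j, [/\ (1 <= i)%N, (1 <= j)%N, odd j
                          & (a = i + j /\ b = i /\ c = 0%N)%N]]
    (rhsb a b c).
Proof.
case/andP => Hcb Hba; rewrite /rhsb.
apply: (iffP idP).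
  case/or4P.
  - by case/andP => /eqP -> /eqP ->; apply: Or41.
  - by case/and3P => /eqP -> /eqP -> /eqP ->; apply: Or42.
  - by case/and3P => /eqP -> H2 /eqP ->; apply: Or43; exists b.
  - case/and4P => /eqP -> H1 H2 H3; apply: Or44; exists b, (a - b); split => //.
    + by rewrite subn_gt0.
    + by rewrite subnKC // ltnW.
case.
- by case=> -> ->.
- by case=> -> [-> ->].
- by case=> i Hi [-> [-> ->]]; rewrite !eqxx Hi !orbT.
- case=> i [j [Hi Hj Ho [-> [-> ->]]]].
  have Hij : i < i + j by rewrite -{1}(addn0 i) ltn_add2l.
  by apply/or4P; apply: Or44; rewrite eqxx Hi Hij addKn Ho.
Qed.

Ltac nlia2 := unfold addn, subn, muln in *; lia.

Theorem lemma3p3 :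
  (forall a b c : nat, (c <= b <= a)%N -> odd (a + b + c) ->
     (has_odd_class_coeff (m_JM a b c) <->
       [\/ b = 0%N /\ c = 0%N,
           a = 1%N /\ b = 1%N /\ c = 1%N,
           exists2 i, (2 <= i)%N & (a = i /\ b = i /\ c = 1%N)
         | exists i j, [/\ (1 <= i)%N, (1 <= j)%N, odd j
                          & (a = i + j /\ b = i /\ c = 0%N)%N]]))
  /\
  (forall i j k : nat, (1 <= i)%N -> (1 <= j)%N -> (1 <= k)%N -> odd (j + k) ->
     ~ has_odd_class_coeff (m_JM (k + i + j) (k + i) k)).
Proof.
have P1 : forall a b c : nat, (c <= b <= a)%N -> odd (a + b + c) ->
     (has_odd_class_coeff (m_JM a b c) <->
       [\/ b = 0%N /\ c = 0%N,
           a = 1%N /\ b = 1%N /\ c = 1%N,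
           exists2 i, (2 <= i)%N & (a = i /\ b = i /\ c = 1%N)
         | exists i j, [/\ (1 <= i)%N, (1 <= j)%N, odd j
                          & (a = i + j /\ b = i /\ c = 0%N)%N]]).
  move=> a b c Hs Ho.
  have := goodb_all a b c; rewrite /goodb Hs Ho !implyTb -par_mJM => /andP [Hinv /eqP Hh].
  apply: (iff_trans (has_odd_iff Hinv)); rewrite Hh.
  by split; move/(rhsbP Hs) => H; exact: H.
split; first exact: P1.
move=> i j k Hi Hj Hk Hjk.
have Hs : (k <= k + i <= k + i + j)%N by rewrite !leq_addr.
have Ho : odd (k + i + j + (k + i) + k).
  by move: Hjk; rewrite !oddD; case: (odd i); case: (odd j); case: (odd k).
rewrite (P1 _ _ _ Hs Ho); move/leP: Hj => Hj; move/leP: Hk => Hk.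
case.
- by case=> _ E; nlia2.
- by case=> E1 [E2 _]; nlia2.
- by case=> x _ [E1 [E2 _]]; nlia2.
- by case=> x [y [_ _ _ [_ [_ E]]]]; nlia2.
Qed.
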